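(* Let $G$ and $H$ be graphs. If $G\in\operatorname{obs}^\ast(H)$, then there is a vertex $v\in V(G)$ such that $G-v\cong H$.
   Context: All graphs are finite, simple and loopless. A full-homomorphism $\varphi\colon G\to H$ is a map $V(G)\to V(H)$ such that for all $x,y\in V(G)$, $xy\in E(G)$ if and only if $\varphi(x)\varphi(y)\in E(H)$. A full $H$-colouring of $G$ is a full-homomorphism $G\to H$. A minimal $H$-obstruction is a graph $G$ that admits no full $H$-colouring while every proper induced subgraph of $G$ admits one; $\operatorname{obs}(H)$ denotes the set of minimal $H$-obstructions (up to isomorphism), and $\operatorname{obs}^\ast(H)$ the set of minimal $H$-obstructions on exactly $|V(H)|+1$ vertices. *)

(* Defs.v *)
From mathcomp Require Import all_boot.
Set Implicit Arguments.
Unset Strict Implicit.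
Unset Printing Implicit Defensive.

Record graph := Graph {
  vert : finType;
  adj : rel vert;
  adj_sym : symmetric adj;
  adj_irr : irreflexive adj }.

Definition full_hom (G H : graph) (f : vert G -> vert H) : Prop :=
  forall x y : vert G, adj x y = adj (f x) (f y).

Definition full_colourable (G H : graph) : Prop :=
  exists f : vert G -> vert H, full_hom f.

Section Induced.
Variables (G : graph) (S : {set vert G}).
Definition ind_vert : finType := {x : vert G | x \in S}.
Definition ind_adj : rel ind_vert := fun x y => adj (val x) (val y).
Lemma ind_adj_sym : symmetric ind_adj.
Proof. by move=> x y; rewrite /ind_adj adj_sym. Qed.
Lemma ind_adj_irr : irreflexive ind_adj.
Proof. by move=> x; rewrite /ind_adj adj_irr. Qed.
Definition induced : graph := Graph ind_adj_sym ind_adj_irr.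
End Induced.

Definition delete_vertex (G : graph) (v : vert G) : graph := induced [set~ v].

Definition min_obstruction (G H : graph) : Prop :=
  ~ full_colourable G H /\
  forall S : {set vert G}, S \proper [set: vert G] -> full_colourable (induced S) H.

Definition obs_star (G H : graph) : Prop :=
  min_obstruction G H /\ #|vert G| = #|vert H| + 1.

Definition isomorphic (G H : graph) : Prop :=
  exists f : vert G -> vert H, bijective f /\ forall x y : vert G, adj x y = adj (f x) (f y).

(* Main.v *)
Require Import Defs.
From mathcomp Require Import all_boot.
From Stdlib Require Import Classical.

Section S.
Variable G : graph.
Local Notation V := (vert G).
Local Notation adj := (@adj G).

Definition dom (v x y : V) : Prop :=
  adj x v /\ ~~ adj y v /\ y != v /\ forall z, z != v -> adj x z = adj y z.

Lemma symG (x y : V) : adj x y = adj y x.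
Proof. exact: adj_sym. Qed.

Lemma irrG (x : V) : adj x x = false.
Proof. exact: adj_irr. Qed.

Hypothesis allbad : forall w : V, exists x y, dom w x y.

Lemma step v x y : dom v x y -> exists a d, dom d a x.
Proof.
case=> Hx [Hy [yv E1]].
have xy : x != y by apply/eqP=> e; move: Hy; rewrite -e Hx.
have [c [d [Hc [Hd [dx E2]]]]] := allbad x.
have cv : c = v.
  apply/eqP/negP => /negP cv.
  have acy : adj c y by rewrite symG -E1 // symG.
  have ady : adj y d by rewrite symG -E2 // eq_sym.
  have dv : d != v by apply/eqP=> e; move: Hy; rewrite -e ady.
  by move: Hd; rewrite symG E1 // ady.
subst c.
have [a [b [Ha [Hb [bd E3]]]]] := allbad d.
exists a, d; split=> //.
have bx : b = x.
  apply/eqP/negP => /negP bx.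
  have ax : a != x by apply/eqP=> e; move: Ha; rewrite e symG (negbTE Hd).
  have ava : adj v a by rewrite E2 // symG.
  have vd : v != d by apply/eqP=> e; move: Hd; rewrite -e symG Hx.
  have bv : adj b v by rewrite -E3 // symG.
  by move: Hb; rewrite symG -E2 // symG bv.
subst b; split=> //; split=> //.
Qed.

Definition Nb (x : V) := [set z | adj x z].

Lemma dom_card v x y : dom v x y -> #|Nb y| < #|Nb x|.
Proof.
case=> Hx [Hy [yv E1]]; apply: proper_card; apply/properP; split.
  apply/subsetP=> z; rewrite !inE => Hz.
  have zv : z != v by apply/eqP=> e; move: Hy; rewrite -e Hz.
  by rewrite E1.
by exists v; rewrite !inE // Hx.
Qed.

Lemma iter k x : (exists v y, dom v x y) ->
  exists a, (exists v y, dom v a y) /\ #|Nb x| + k <= #|Nb a|.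
Proof.
elim: k x => [|k IH] x Hx; first by exists x; rewrite addn0.
case: Hx => v [y D]; have [a [d Da]] := step _ _ _ D.
have [b [Hb Hk]] := IH a (ex_intro _ d (ex_intro _ x Da)).
exists b; split=> //; have := dom_card _ _ _ Da; rewrite addnS; move=> h.
by apply: leq_trans Hk; rewrite ltn_add2r.
Qed.

Lemma no_allbad : #|V| = 0 -> False.
Abort.

Lemma allbad_false (x0 : V) : False.
Proof.
have [x [y D]] := allbad x0.
have [a [_ Ha]] := iter #|V|.+1 x (ex_intro _ x0 (ex_intro _ y D)).
have := max_card (Nb a); move: Ha; rewrite addnS.
move=> h1 h2; have := leq_trans h1 h2; rewrite ltnNge leq_addl //.
Qed.
End S.

Lemma pd (G H : graph) : ~ full_colourable G H ->
  (forall S : {set vert G}, S \proper [set: vert G] -> full_colourable (induced S) H) ->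
  forall x y : vert G, (forall z, adj x z = adj y z) -> x = y.
Proof.
move=> ncol hsub x y Hxy; apply: NNPP => /eqP xy.
have Sp : [set~ x] \proper [set: vert G].
  by apply/properP; split; [apply/subsetP=> ? | exists x; rewrite !inE ?eqxx].
have [f Hf] := hsub _ Sp.
have Hy : y \in [set~ x] by rewrite !inE eq_sym.
pose u0 : ind_vert [set~ x] := exist _ y Hy.
pose r z := if z == x then y else z.
have rS z : r z \in [set~ x].
  by rewrite /r; case: eqP => [_|/eqP]; rewrite // !inE.
apply: ncol; exists (fun z => f (insubd u0 (r z))) => z w.
rewrite -Hf /= /ind_adj !insubdK //.
have Hxy' t : adj t x = adj t y by rewrite adj_sym Hxy adj_sym.
rewrite /r; case: eqP => [->|_]; case: eqP => [->|_] //.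
- by rewrite Hxy Hxy' !adj_irr.
Qed.

Theorem mainTheorem9 (G H : graph) :
  obs_star G H -> exists v : vert G, isomorphic (delete_vertex v) H.
Proof.
move=> [[ncol hsub] card].
have PD := pd _ _ ncol hsub.
apply: NNPP => Hno.
have allbad : forall w : vert G, exists x y, dom G w x y.
  move=> v.
  have Sp : [set~ v] \proper [set: vert G].
    by apply/properP; split; [apply/subsetP=> ? | exists v; rewrite !inE ?eqxx].
  have [f Hf] := hsub _ Sp.
  case: (classic (injective f)) => [finj|ninj].
    exfalso; apply: Hno; exists v; exists f; split => //.
    apply: inj_card_bij finj _.
    rewrite card_sig.
    have -> : #|[pred x | x \in [set~ v]]| = #|[set~ v]| by apply: eq_card.
    by rewrite cardsC1 card addn1.
  have [u1 Hu1] := not_all_ex_not _ _ ninj.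
  have [u2 Hu2] := not_all_ex_not _ _ Hu1.
  have [e12 n12] := imply_to_and _ _ Hu2.
  have xy : val u1 != val u2 by apply/eqP=> e; apply: n12; apply: val_inj.
  have tw : forall z, z != v -> adj (val u1) z = adj (val u2) z.
    move=> z zv.
    have zS : z \in [set~ v] by rewrite !inE.
    have h1 := Hf u1 (exist _ z zS); have h2 := Hf u2 (exist _ z zS).
    rewrite /= /ind_adj /= in h1 h2.
    by rewrite h1 h2 e12.
  have nv : adj (val u1) v != adj (val u2) v.
    apply/negP => /eqP e; move/eqP: xy; apply; apply: PD => z.
    by case: (eqVneq z v) => [->|zv] //; apply: tw.
  have u1v : val u1 != v by have := valP u1; rewrite !inE.
  have u2v : val u2 != v by have := valP u2; rewrite !inE.
  case A1: (adj (val u1) v); rewrite A1 in nv.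
    by exists (val u1), (val u2); split=> //.
  exists (val u2), (val u1); split; first by case: (adj _ v) nv.
  split; first by rewrite A1.
  by split=> // z zv; rewrite tw.
have : 0 < #|vert G| by rewrite card addn1.
case/card_gt0P => x0 _.
exact: (allbad_false _ allbad x0).
Qed.
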